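(* Let $f:2^V\to\mathbb{Z}_{\ge0}$ be a connectivity function, $W\subseteq V$, and suppose $(C,V\setminus C,\emptyset)$ is a minimum $W$-improvement. Then $f(C\cap W')\le f(W')$ for every $W'\subseteq W$. Moreover, if $f(C\cap W')=f(W')$, then $(C\cup W', (V\setminus C)\setminus W', \emptyset)$ is also a minimum $W$-improvement.
   Context: A connectivity function $f:2^V\to\mathbb{Z}_{\ge0}$ ($V$ finite) satisfies $f(\emptyset)=0$, $f(X)=f(V\setminus X)$, and $f(X\cup Y)+f(X\cap Y)\le f(X)+f(Y)$. For $W\subseteq V$, a $W$-improvement is a tripartition $(C_1,C_2,C_3)$ of $V$ (pairwise disjoint, possibly empty, union $V$) with $f(C_i)<f(W)/2$, $f(C_i\cap W)<f(W)$, $f(C_i\cap(V\setminus W))<f(W)$ for each $i$. Its width is $\max_i f(C_i)$, its sum-width is $\sum_i f(C_i)$, and its arity is the number of nonempty $C_i$. A $W$-improvement is minimum if it has minimum width among all $W$-improvements, subject to that minimum arity, and subject to those minimum sum-width. *)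

(* Defs.v *)
From mathcomp Require Import all_boot.
Set Implicit Arguments. Unset Strict Implicit. Unset Printing Implicit Defensive.

Definition connectivity (V : finType) (f : {set V} -> nat) : Prop :=
  [/\ f set0 = 0,
      forall X : {set V}, f X = f (~: X) &
      forall X Y : {set V}, f (X :|: Y) + f (X :&: Y) <= f X + f Y].

Definition tripartition (V : finType) (C1 C2 C3 : {set V}) : Prop :=
  [/\ [disjoint C1 & C2], [disjoint C1 & C3], [disjoint C2 & C3] &
      C1 :|: C2 :|: C3 = [set: V]].

(* f(C) < f(W)/2 is written 2 f(C) < f(W) (exact over the rationals). *)
Definition good_part (V : finType) (f : {set V} -> nat) (W C : {set V}) : Prop :=
  [/\ 2 * f C < f W, f (C :&: W) < f W & f (C :&: ~: W) < f W].

Definition improvement (V : finType) (f : {set V} -> nat) (W C1 C2 C3 : {set V})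
  : Prop :=
  tripartition C1 C2 C3 /\
  [/\ good_part f W C1, good_part f W C2 & good_part f W C3].

Definition width (V : finType) (f : {set V} -> nat) (C1 C2 C3 : {set V}) : nat :=
  maxn (f C1) (maxn (f C2) (f C3)).

Definition sumwidth (V : finType) (f : {set V} -> nat) (C1 C2 C3 : {set V}) : nat :=
  f C1 + f C2 + f C3.

Definition arity (V : finType) (C1 C2 C3 : {set V}) : nat :=
  (C1 != set0) + (C2 != set0) + (C3 != set0).

Definition min_improvement (V : finType) (f : {set V} -> nat) (W C1 C2 C3 : {set V})
  : Prop :=
  improvement f W C1 C2 C3 /\
  forall D1 D2 D3 : {set V}, improvement f W D1 D2 D3 ->
    width f C1 C2 C3 <= width f D1 D2 D3 /\
    (width f D1 D2 D3 = width f C1 C2 C3 ->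
       arity C1 C2 C3 <= arity D1 D2 D3 /\
       (arity D1 D2 D3 = arity C1 C2 C3 ->
          sumwidth f C1 C2 C3 <= sumwidth f D1 D2 D3)).

(* Main.v *)
Require Import Defs.
From mathcomp Require Import all_boot.
From mathcomp Require Import zify.
Set Implicit Arguments. Unset Strict Implicit.

Section L.
Variables (V : finType) (f : {set V} -> nat).
Hypothesis hf : connectivity f.

Lemma fC X : f (~: X) = f X.
Proof. by case: hf => _ h _; rewrite -h. Qed.

Lemma sub X Y : f (X :|: Y) + f (X :&: Y) <= f X + f Y.
Proof. by case: hf. Qed.

Lemma good_notT W X : good_part f W X -> X != [set: V].
Proof.
case=> _ h _; apply/eqP => E; move: h; rewrite E setTI; lia.
Qed.

Lemma arity_ge2 W D1 D2 D3 : improvement f W D1 D2 D3 -> 2 <= arity D1 D2 D3.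
Proof.
case=> [[_ _ _ U]] [g1 g2 g3].
have n1 := good_notT g1; have n2 := good_notT g2; have n3 := good_notT g3.
rewrite /arity.
case: (eqVneq D1 set0) => e1; case: (eqVneq D2 set0) => e2;
  case: (eqVneq D3 set0) => e3 //=; subst; move: U; rewrite ?set0U ?setU0 => U;
  [move: n3 | move: n3 | move: n2 | move: n1]; by rewrite -U eqxx.
Qed.

Variables (W C W' : {set V}).
Hypothesis sW : W' \subset W.

Lemma k1 : f (C :|: W') + f (C :&: W') <= f C + f W'.
Proof. exact: sub. Qed.

Lemma k2 : f ((C :|: W') :&: W) + f (C :&: W') <= f (C :&: W) + f W'.
Proof.
have -> : (C :|: W') :&: W = (C :&: W) :|: W'.
  apply/setP => x; have := subsetP sW x; rewrite !inE.
  by case: (x \in C); case: (x \in W); case: (x \in W') => // ->.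
have -> : C :&: W' = (C :&: W) :&: W'.
  apply/setP => x; have := subsetP sW x; rewrite !inE.
  by case: (x \in C); case: (x \in W); case: (x \in W') => // ->.
exact: sub.
Qed.

Lemma k3 : f ((~: C :\: W') :&: W) + f (C :&: W') <= f (~: C :&: W) + f W'.
Proof.
have := sub (~: C :&: W) (~: W').
have -> : (~: C :&: W) :|: ~: W' = ~: (C :&: W').
  apply/setP => x; have := subsetP sW x; rewrite !inE.
  by case: (x \in C); case: (x \in W); case: (x \in W') => // ->.
have -> : (~: C :&: W) :&: ~: W' = (~: C :\: W') :&: W.
  apply/setP => x; rewrite !inE.
  by case: (x \in C); case: (x \in W); case: (x \in W').
rewrite !fC; lia.
Qed.

Lemma e4 : (C :|: W') :&: ~: W = C :&: ~: W.
Proof.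
apply/setP => x; have := subsetP sW x; rewrite !inE.
by case: (x \in C); case: (x \in W); case: (x \in W') => // ->.
Qed.

Lemma e5 : (~: C :\: W') :&: ~: W = ~: C :&: ~: W.
Proof.
apply/setP => x; have := subsetP sW x; rewrite !inE.
by case: (x \in C); case: (x \in W); case: (x \in W') => // ->.
Qed.

Lemma e6 : ~: C :\: W' = ~: (C :|: W').
Proof. by rewrite setCU setDE. Qed.

Lemma new_impr : improvement f W C (~: C) set0 -> f W' <= f (C :&: W') ->
  improvement f W (C :|: W') (~: C :\: W') set0.
Proof.
move=> [_ [[a1 b1 c1] [a2 b2 c2] g3]] le.
have h1 := k1; have h2 := k2; have h3 := k3.
split; last split => //.
- split.
  + rewrite -setI_eq0; apply/eqP/setP => x; rewrite !inE.
    by case: (x \in C); case: (x \in W').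
  + by rewrite -setI_eq0 setI0.
  + by rewrite -setI_eq0 setI0.
  + apply/setP => x; rewrite !inE.
    by case: (x \in C); case: (x \in W').
- split; [lia | lia | by rewrite e4].
- split; [rewrite e6 fC; rewrite fC in a2; lia | lia | by rewrite e5].
Qed.

End L.

Theorem lemma6 (V : finType) (f : {set V} -> nat) (W C : {set V}) :
  connectivity f ->
  min_improvement f W C (~: C) set0 ->
  forall W' : {set V}, W' \subset W ->
    f (C :&: W') <= f W' /\
    (f (C :&: W') = f W' ->
       min_improvement f W (C :|: W') (~: C :\: W') set0).
Proof.
move=> hf [imp mn] W' sW.
have f0 : f set0 = 0 by case: hf.
have wold : width f C (~: C) set0 = f C.
  by rewrite /width fC // f0; lia.
have wnew : width f (C :|: W') (~: C :\: W') set0 = f (C :|: W').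
  by rewrite /width e6 fC // f0; lia.
have h1 := sub hf C W'.
have NI : f W' <= f (C :&: W') -> improvement f W (C :|: W') (~: C :\: W') set0.
  exact: (new_impr hf sW imp).
have first : f (C :&: W') <= f W'.
  rewrite leqNgt; apply/negP => lt.
  have I := NI (ltnW lt).
  have [m _] := mn _ _ _ I.
  move: m; rewrite wold wnew; lia.
split => // eq.
have I := NI (eq_leq (esym eq)).
have [m _] := mn _ _ _ I.
move: m; rewrite wold wnew => m.
have ew : f (C :|: W') = f C by lia.
have a_old := arity_ge2 imp.
have a_new := arity_ge2 I.
split => // D1 D2 D3 ID.
have aD := arity_ge2 ID.
have [mw mr] := mn _ _ _ ID.
rewrite wnew ew -wold; split => // wE.
have [ma ms] := mr wE.
have anew2 : arity (C :|: W') (~: C :\: W') set0 = 2.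
  move: a_new; rewrite /arity eqxx /=.
  case: (C :|: W' != set0); case: (~: C :\: W' != set0) => //.
have aold2 : arity C (~: C) set0 = 2.
  move: a_old; rewrite /arity eqxx /=.
  case: (C != set0); case: (~: C != set0) => //.
rewrite anew2; split => // aE.
have := ms (etrans aE (esym aold2)).
rewrite /sumwidth e6 // !fC // ew f0; lia.
Qed.
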